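(* There are absolute constants $\varepsilon_0>0$ and $c_0>0$ such that, if $k\le\varepsilon_0n$, then \[ \pi(\mathcal G_{\mathrm{tr}}^c)\le e^{-c_0n}\quad\text{and}\quad\mu(\mathcal G_{\mathrm{tr}}^c)\le e^{-c_0n}. \]
   Context: $V=\mathbb F_2^k$ ($k\ge1$), $\mathrm{St}(n,k)=\{(z_1,\dots,z_n)\in V^n:\operatorname{span}(z_1,\dots,z_n)=V\}$, $\pi$ is the uniform measure on $\mathrm{St}(n,k)$ and $\mu$ the uniform measure on $V^n$. For $\xi\in V^*$, $\chi_\xi(u)=(-1)^{\xi(u)}$, $S_\xi(z)=\sum_{i=1}^n\chi_\xi(z_i)$, and $\mathcal G_{\mathrm{tr}}=\{z\in\mathrm{St}(n,k):\max_{0\ne\xi\in V^*}|S_\xi(z)|\le n/4\}$. Complements: $\pi(\mathcal G^c_{\mathrm{tr}})=1-\pi(\mathcal G_{\mathrm{tr}})$, $\mu(\mathcal G^c_{\mathrm{tr}})=1-\mu(\mathcal G_{\mathrm{tr}})$. *)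

(* Defs.v *)
From HB Require Import structures.
From mathcomp Require Import all_boot all_order all_algebra.
From mathcomp Require Import all_classical all_reals all_analysis.
Set Implicit Arguments. Unset Strict Implicit. Unset Printing Implicit Defensive.
Import Order.TTheory GRing.Theory Num.Theory.
Local Open Scope ring_scope.

Definition config (n k : nat) := {ffun 'I_n -> 'rV['F_2]_k}.

Definition spans n k (z : config n k) : bool :=
  row_full (\matrix_(i < n, j < k) z i 0 j).

Definition St n k : {set config n k} := [set z | spans z].

(* A linear functional xi in V^* is represented by a column vector: xi(u) = u *m xi. *)
Definition chi k (xi : 'cV['F_2]_k) (u : 'rV['F_2]_k) : int :=
  if (u *m xi) 0 0 == 0 then 1 else -1.

Definition Ssum n k (xi : 'cV['F_2]_k) (z : config n k) : int :=
  \sum_(i < n) chi xi (z i).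

Definition Gtr n k : {set config n k} :=
  [set z in St n k | [forall xi : 'cV['F_2]_k,
      (xi != 0) ==> (4 * `|Ssum xi z| <= (n%:Z))]].

(* pi = uniform measure on St(n,k); mu = uniform measure on V^n. *)
Definition pi_Gtr_c (R : realType) n k : R :=
  1 - (#|Gtr n k|%:R / #|St n k|%:R).
Definition mu_Gtr_c (R : realType) n k : R :=
  1 - (#|Gtr n k|%:R / #|{: config n k}|%:R).

(* Main.v *)
Set Warnings "-notation-overridden,-ambiguous-paths,-notation-incompatible-prefix".
Require Import Defs.
From HB Require Import structures.
From mathcomp Require Import all_boot all_order all_algebra.
From mathcomp Require Import all_classical all_reals all_analysis.
From mathcomp Require Import zify ring lra.
Import Order.TTheory GRing.Theory Num.Theory.
Local Open Scope ring_scope.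
Set Implicit Arguments. Unset Strict Implicit. Unset Printing Implicit Defensive.
Lemma F2cases (x : 'F_2) : x = 0 \/ x = 1.
Proof. case: x => [[|[|]]] //= ?; [left|right]; exact/val_inj. Qed.

Lemma F2_11 : (1 + 1 : 'F_2) = 0.
Proof. exact/val_inj. Qed.

Definition ink k (xi : 'cV['F_2]_k) (u : 'rV['F_2]_k) : bool := (u *m xi) 0 0 == 0.

Lemma shift_exists k (xi : 'cV['F_2]_k) : xi != 0 ->
  exists e : 'rV['F_2]_k, forall u, ink xi (u + e) = ~~ ink xi u.
Proof.
move=> nz.
have [j hj]: exists j, xi j 0 != 0.
  case: (pselect (exists j, xi j 0 != 0)) => // H; exfalso; move/eqP: nz; apply.
  apply/matrixP=> i l; rewrite ord1 mxE; apply/eqP; apply/negPn/negP => h; apply H; by exists i.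
have [e he']: exists e : 'rV['F_2]_k, row j xi = e *m xi by eexists; exact: rowE.
have he : (e *m xi) 0 0 = 1.
  rewrite -he' mxE. by case: (F2cases (xi j 0)) hj => ->; rewrite ?eqxx.
exists e => u; rewrite /ink mulmxDl mxE he.
by case: (F2cases ((u *m xi) 0 0)) => ->; rewrite ?F2_11 ?add0r ?eqxx ?oner_eq0.
Qed.

Section Weights.
Variable R : realType.
Variable A : R.
Hypothesis A_gt0 : 0 < A.

Definition wt k (s : bool) (xi : 'cV['F_2]_k) (u : 'rV['F_2]_k) : R :=
  if ink xi u == s then A else A^-1.

Lemma wt_gt0 k s (xi : 'cV['F_2]_k) u : 0 < wt s xi u.
Proof. by rewrite /wt; case: ifP; rewrite ?invr_gt0. Qed.

Lemma sum_wt k s (xi : 'cV['F_2]_k) : xi != 0 ->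
  \sum_u wt s xi u = #|'rV['F_2]_k|%:R * ((A + A^-1) / 2).
Proof.
move=> nz; have [e he] := shift_exists nz.
set S := \sum_u _.
have h : S + S = (A + A^-1) *+ #|'rV['F_2]_k|.
  rewrite {2}/S (reindex_inj (addIr e)) -big_split -sumr_const.
  apply: eq_bigr => u _; rewrite /wt he.
  by case: (ink xi u); clear S; case: s => //=; rewrite addrC.
have -> : S = (S + S) / 2 by field.
rewrite h -mulr_natr; field; exact: lt0r_neq0.
Qed.

End Weights.

Lemma prod_pred_const (R : realType) (I : finType) (P : pred I) (c : R) :
  \prod_(i | P i) c = c ^+ #|P|.
Proof. exact: prodr_const. Qed.

Lemma Ssum_card n k (xi : 'cV['F_2]_k) (z : config n k) :
  Ssum xi z = #|[pred i | ink xi (z i)]|%:Z - #|[pred i | ~~ ink xi (z i)]|%:Z.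
Proof.
rewrite /Ssum (bigID (fun i => ink xi (z i))) /=.
rewrite (eq_bigr (fun=> 1)); last by move=> i; rewrite /chi /ink => ->.
rewrite [X in _ + X](eq_bigr (fun=> -1)); last by move=> i; rewrite /chi /ink => /negbTE ->.
by rewrite !sumr_const -!natz mulNrn.
Qed.

Lemma prod_wt (R : realType) (A : R) n k s (xi : 'cV['F_2]_k) (z : config n k) :
  \prod_i wt A s xi (z i) =
  (if s then A else A^-1) ^+ #|[pred i | ink xi (z i)]| *
  (if s then A^-1 else A) ^+ #|[pred i | ~~ ink xi (z i)]|.
Proof.
rewrite (bigID (fun i => ink xi (z i))) /=.
rewrite (eq_bigr (fun=> if s then A else A^-1)); last first.
  by move=> i h; rewrite /wt h; case: s.
rewrite [X in _ * X](eq_bigr (fun=> if s then A^-1 else A)); last first.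
  by move=> i /negbTE h; rewrite /wt h; case: s.
by rewrite !prod_pred_const.
Qed.

Lemma pt (R : realType) (a : R) (a1 : 1 <= a) n k (xi : 'cV['F_2]_k) (z : config n k) :
  n%:Z < 4 * `|Ssum xi z| ->
  a ^+ n <= \prod_i wt (a^+4) true xi (z i) + \prod_i wt (a^+4) false xi (z i).
Proof.
rewrite Ssum_card !prod_wt /=.
have hpq : (#|[pred i | ink xi (z i)]| + #|[pred i | ~~ ink xi (z i)]|)%N = n.
  rewrite -[X in _ = X]card_ord -(cardC [pred i | ink xi (z i)]); congr (_ + _)%N.
move: hpq; set p := #|[pred i | ink xi (z i)]|; set q := #|[pred i | ~~ ink xi (z i)]|.
move=> hpq h.
have a0 : 0 < a by apply: lt_le_trans a1.
have A0 : 0 < a^+4 by rewrite exprn_gt0.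
have key : forall m l, (n + 4 * l <= 4 * m)%N -> a ^+ n <= (a^+4)^+m * (a^+4)^-1^+l.
  move=> m l hml; rewrite exprVn -!exprM ler_pdivlMr ?exprn_gt0 // -exprD.
  apply: ler_weXn2l => //; lia.
have pos : forall m l, 0 <= (a^+4)^+m * (a^+4)^-1^+l.
  by move=> m l; rewrite mulr_ge0 // exprn_ge0 // ?invr_ge0 ltW.
case: (leqP q p) => hqp.
  have hh : (n + 4 * q <= 4 * p)%N by clear -h hqp hpq; lia.
  by apply: le_trans (key p q hh) _; rewrite lerDl mulrC pos.
have hh : (n + 4 * p <= 4 * q)%N by clear -h hqp hpq; lia.
rewrite [X in _ <= _ + X]mulrC.
by apply: le_trans (key q p hh) _; rewrite lerDr pos.
Qed.

Definition Bset n k (xi : 'cV['F_2]_k) : {set config n k} :=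
  [set z | n%:Z < 4 * `|Ssum xi z|].

Lemma count_B (R : realType) (a : R) (a1 : 1 <= a) n k (xi : 'cV['F_2]_k) : xi != 0 ->
  #|Bset n xi|%:R * a^+n <= 2 * (#|'rV['F_2]_k|%:R * ((a^+4 + (a^+4)^-1)/2))^+n.
Proof.
move=> nz.
have A0 : 0 < a^+4 by rewrite exprn_gt0 // (lt_le_trans ltr01 a1).
rewrite mulrC mulr_natr -sumr_const.
apply: (le_trans (y := \sum_(z : config n k)
   (\prod_i wt (a^+4) true xi (z i) + \prod_i wt (a^+4) false xi (z i)))).
  rewrite big_mkcond /=; apply: ler_sum => z _; case: ifP => hz.
    by apply: pt => //; move: hz; rewrite inE.
  by rewrite addr_ge0 // prodr_ge0 // => i _; apply: ltW; apply: wt_gt0.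
have E s : \sum_(z : config n k) \prod_i wt (a^+4) s xi (z i) =
    (#|'rV['F_2]_k|%:R * ((a^+4 + (a^+4)^-1)/2))^+n.
  rewrite /config -(bigA_distr_bigA (fun (i:'I_n) u => wt (a^+4) s xi u)) /=.
  rewrite (eq_bigr (fun=> #|'rV['F_2]_k|%:R * ((a^+4 + (a^+4)^-1)/2))); last first.
    by move=> i _; apply: sum_wt.
  by rewrite prodr_const card_ord.
rewrite big_split /= !E; set X := (_ ^+ n); lra.
Qed.

Lemma nonspan_xi n k (z : config n k) : ~~ spans z ->
  exists xi : 'cV['F_2]_k, xi != 0 /\ forall i, ink xi (z i).
Proof.
rewrite /spans /row_full => hr.
move: hr; set M := \matrix_(i < n, j < k) z i 0 j => hr.
have hlt : (\rank M < k)%N by rewrite ltn_neqAle hr rank_leq_col.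
set K := kermx M^T.
have hK : K != 0.
  apply/negP => /eqP hK0; have := mxrank_ker M^T.
  rewrite -/K hK0 mxrank0 mxrank_tr => h; clear -h hlt; lia.
have [i hi] : exists i, row i K != 0.
  case: (pselect (exists i, row i K != 0)) => // H; exfalso; move/eqP: hK; apply.
  apply/row_matrixP => i; rewrite row0; apply/eqP; apply/negPn/negP => h; apply: H; by exists i.
exists (row i K)^T; split; first by rewrite trmx_eq0.
have hM : M *m (row i K)^T = 0.
  by rewrite -[M]trmxK -trmx_mul -row_mul mulmx_ker row0 trmx0.
move=> l; rewrite /ink.
have -> : z l = row l M by apply/matrixP => r j; rewrite ord1 !mxE.
by rewrite -row_mul hM !mxE.
Qed.

Lemma notG n k (z : config n k) : (0 < n)%N -> z \notin Gtr n k ->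
  exists xi : 'cV['F_2]_k, xi != 0 /\ z \in Bset n xi.
Proof.
move=> n0; rewrite /Gtr inE negb_and => /orP [].
  rewrite /St inE => /nonspan_xi [xi [nz h]]; exists xi; split=> //.
  rewrite inE.
  have -> : Ssum xi z = n%:Z.
    rewrite /Ssum (eq_bigr (fun=> 1)); first by rewrite sumr_const card_ord natz.
    by move=> i _; rewrite /chi; move: (h i); rewrite /ink => ->.
  clear -n0; lia.
move/forallPn => [xi]; rewrite negb_imply => /andP [nz h].
by exists xi; split => //; rewrite inE ltNge.
Qed.

Lemma cardGc n k : (0 < n)%N ->
  (#|~: Gtr n k| <= \sum_(xi : 'cV['F_2]_k | xi != 0%R) #|Bset n xi|)%N.
Proof.
move=> n0; rewrite -sum1_card.
apply: (leq_trans (n := \sum_(z in ~: Gtr n k)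
   \sum_(xi : 'cV['F_2]_k | xi != 0%R) (z \in Bset n xi : nat))).
  apply: leq_sum => z; rewrite inE => /(notG n0) [xi [nz hz]].
  by rewrite (bigD1 xi) //= hz leq_addr.
rewrite exchange_big /=; apply: leq_sum => xi _.
apply: (leq_trans (n := \sum_z (z \in Bset n xi : nat))).
  rewrite [X in (_ <= X)%N](bigID (fun z => z \in ~: Gtr n k)) /=; exact: leq_addr.
rewrite -sum1_card [X in (_ <= X)%N]big_mkcond /=; apply: eq_leq; apply: eq_bigr => z _.
by case: (z \in _).
Qed.

Lemma rbound (R : realType) :
  let a : R := 21 / 20 in
  0 <= (a^+4 + (a^+4)^-1) / (2 * a) /\ (a^+4 + (a^+4)^-1) / (2 * a) <= 995/1000.
Proof.
move=> a.
have ha2 : a^+2 = 441 / 400 by rewrite /a; field.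
have hA : 6/5 <= a^+4 /\ a^+4 <= 5/4.
  have -> : a^+4 = a^+2 * a^+2 by rewrite -exprD.
  rewrite ha2; split; lra.
move: hA; set A := a^+4 => -[hA1 hA2].
have A0 : A != 0 by apply/eqP => h; rewrite h in hA1; lra.
have hx : A * A^-1 = 1 by field.
have x0 : 0 < A^-1 by rewrite invr_gt0; lra.
have hx1 : A^-1 <= 5/6 by nra.
rewrite /a; split; lra.
Qed.

Lemma numeric (R : realType) (k n : nat) (r : R) : (1 <= k)%N ->
  (k%:R : R) <= 1/1000 * n%:R -> 0 <= r -> r <= 995/1000 ->
  (2^k * 2)%:R * r^+n <= expR (- (1/1000 * n%:R)).
Proof.
move=> k1 hk r0 r1.
have e1 : (2:R) <= expR 1 by have := expR_ge1Dx (1:R); lra.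
have e2 : (4:R) <= expR 2.
  have -> : (2:R) = 2%:R * 1 by rewrite mulr1.
  rewrite expRM_natl; have -> : (4:R) = 2^+2 by rewrite expr2; lra.
  by apply: lerXn2r; rewrite ?nnegrE //; lra.
have h1 : ((2^k * 2)%:R : R) <= expR (k%:R * 2).
  rewrite expRM_natl; apply: (le_trans (y := (4:R)^+k)).
    rewrite -natrX ler_nat.
    have h2 : (2 <= 2^k)%N by rewrite -{1}(expn1 2) leq_pexp2l.
    by rewrite (_ : 4 = 2 * 2)%N // expnMn leq_mul2l h2 orbT.
  by apply: lerXn2r; rewrite ?nnegrE //; lra.
have h2 : r^+n <= expR (n%:R * (-1/200)).
  rewrite expRM_natl; apply: lerXn2r; rewrite ?nnegrE //.
  all: try by apply/ltW/expR_gt0.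
  apply: le_trans (expR_ge1Dx _). have -> : (1 + -1/200 : R) = 995/1000 by field. exact: r1.
apply: le_trans (ler_pM _ _ h1 h2) _ => //; first by rewrite exprn_ge0.
rewrite -expRD ler_expR; have := ler0n R n; lra.
Qed.

Unset Implicit Arguments.

Theorem lemma3p1 (R : realType) :
  exists eps0 c0 : R, 0 < eps0 /\ 0 < c0 /\
    forall n k : nat, (1 <= k)%N -> k%:R <= eps0 * n%:R ->
      pi_Gtr_c R n k <= expR (- (c0 * n%:R)) /\
      mu_Gtr_c R n k <= expR (- (c0 * n%:R)).
Proof.
exists (1/1000), (1/1000); split; [lra | split; [lra | ]].
move=> n k k1 hk.
have k1R : (1:R) <= k%:R by rewrite ler1n.
have n0R : (0:R) < n%:R by lra.
have n0 : (0 < n)%N by rewrite -(ltr0n R).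
move: (rbound R) => /=.
set a : R := 21/20.
set r := (a^+4 + (a^+4)^-1) / (2*a).
move=> [r0 r1].
have a1 : 1 <= a by rewrite /a; lra.
have a0 : a != 0 by rewrite /a; apply/eqP; lra.
have hr : (a^+4 + (a^+4)^-1)/2 = a * r by rewrite /r; field.
clearbody r a.
set T : R := #|{: config n k}|%:R.
have hT : T = #|'rV['F_2]_k|%:R ^+ n by rewrite /T /config card_ffun card_ord natrX.
have T0 : 0 < T by rewrite /T ltr0n; apply/card_gt0P; exists [ffun=> 0].
have hB : forall xi : 'cV['F_2]_k, xi != 0 -> #|Bset n xi|%:R <= 2 * T * r^+n.
  move=> xi nz; have := count_B a1 n nz.
  rewrite hr !exprMn -hT => h.
  have an : 0 < a^+n by rewrite exprn_gt0 // (lt_le_trans ltr01 a1).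
  rewrite -(ler_pM2r an).
  apply: le_trans h _; rewrite le_eqVlt; apply/orP; left; apply/eqP; ring.
have hG : mu_Gtr_c R n k = #|~: Gtr n k|%:R / T.
  have hc : T = #|Gtr n k|%:R + #|~: Gtr n k|%:R by rewrite /T -(cardsC (Gtr n k)) natrD.
  rewrite /mu_Gtr_c -/T.
  have -> : (#|~: Gtr n k|%:R : R) = T - #|Gtr n k|%:R by rewrite hc; ring.
  field; exact: lt0r_neq0.
have hmu : mu_Gtr_c R n k <= (2^k * 2)%:R * r^+n.
  rewrite hG ler_pdivrMr //.
  apply: (le_trans (y := \sum_(xi : 'cV['F_2]_k | xi != 0) (#|Bset n xi|%:R : R))).
    by rewrite -natr_sum ler_nat cardGc.
  apply: (le_trans (y := \sum_(xi : 'cV['F_2]_k) 2 * T * r^+n)).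
    rewrite big_mkcond /=; apply: ler_sum => xi _; case: ifP => nz; first exact: hB.
    by rewrite !mulr_ge0 ?exprn_ge0 // ltW.
  rewrite sumr_const card_mx card_Fp // muln1 -(mulr_natr (2 * T * r^+n) (2^k)) natrM natrX.
  rewrite le_eqVlt; apply/orP; left; apply/eqP; ring.
have hpi : pi_Gtr_c R n k <= mu_Gtr_c R n k.
  rewrite /pi_Gtr_c /mu_Gtr_c -/T.
  have hGS : (#|Gtr n k| <= #|St n k|)%N.
    by apply: subset_leq_card; apply/fintype.subsetP => z; rewrite inE => /andP[].
  have hST : (#|St n k| <= #|{: config n k}|)%N by apply: max_card.
  case: (posnP #|St n k|) => hS.
    have hG0 : #|Gtr n k| = 0%N by clear -hGS hS; lia.
    by rewrite hG0 !mulr0n !mul0r.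
  rewrite lerD2l lerN2; apply: ler_wpM2l; first exact: ler0n.
  rewrite lef_pV2 ?posrE ?ltr0n //; first by rewrite /T ler_nat.
  by rewrite -(ltr0n R).
have hfin := numeric k1 hk r0 r1.
split; [exact: le_trans hpi (le_trans hmu hfin) | exact: le_trans hmu hfin].
Qed.
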